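(* Let $q$ be a power of an odd prime, $a\in\mathbb{F}_q^*$ with $a\neq\pm1$, $b\in\mathbb{F}_q$ a nonsquare, $\beta\in\mathbb{F}_{q^2}$ with $\beta^2=b$, and $f(X)=X^{q+1}+aX^2$ on $\mathbb{F}_{q^2}$. For $\gamma\in\mathbb{F}_{q^2}$ let $f^{-1}(\gamma)=\{X\in\mathbb{F}_{q^2}: f(X)=\gamma\}$. Let $\alpha\in\mathbb{F}_q^*$. Then: (1) $\#f^{-1}(\alpha)=0$ if $\chi_2(\alpha(a-1))=1$ and $\chi_2(\alpha(a+1))=-1$; $\#f^{-1}(\alpha)=4$ if $\chi_2(\alpha(a-1))=-1$ and $\chi_2(\alpha(a+1))=1$; and $\#f^{-1}(\alpha)=2$ otherwise. (2) If $q\equiv3\pmod4$, then $\#f^{-1}(\alpha\beta)=0$ if $\chi_2(1-a^2)=1$ and $\#f^{-1}(\alpha\beta)=2$ if $\chi_2(1-a^2)=-1$. (3) If $q\equiv1\pmod4$, then $\#f^{-1}(\alpha\beta)=4$ if $\chi_2(1-a^2)=-1$ and $\chi_2(2\gamma_a\alpha a)=1$, and $\#f^{-1}(\alpha\beta)=0$ otherwise, where (when $\chi_2(1-a^2)=-1$) $\gamma_a\in\mathbb{F}_q$ satisfies $\gamma_a^2=-\frac{(a-1)b}{a+1}$.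
   Context: $\chi_2$ is the quadratic character of $\mathbb{F}_q$: $\chi_2(\alpha)=1$ if $\alpha$ is a nonzero square, $-1$ if $\alpha$ is a nonsquare, $0$ if $\alpha=0$. *)

(* Defs.v *)
From mathcomp Require Import all_boot all_order all_algebra all_field.
Set Implicit Arguments. Unset Strict Implicit. Unset Printing Implicit Defensive.
Import GRing.Theory.
Local Open Scope ring_scope.

(* L plays the role of F_{q^2}; F_q is the subfield {x | x^q = x}. *)
Definition inFq (L : finFieldType) (q : nat) (x : L) : bool := x ^+ q == x.

Definition chi2 (L : finFieldType) (q : nat) (x : L) : int :=
  if x == 0 then 0
  else if [exists y : L, inFq q y && (y ^+ 2 == x)] then 1 else -1.

Definition ff (L : finFieldType) (q : nat) (a X : L) : L := X ^+ q.+1 + a * X ^+ 2.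

Definition npre (L : finFieldType) (q : nat) (a g : L) : nat :=
  #|[set X : L | ff q a X == g]|.

(* Main.v *)
Require Import Defs.
From mathcomp Require Import all_boot all_order all_algebra all_field all_fingroup all_solvable.
From mathcomp Require Import ring zify.
Import GRing.Theory.
Set Implicit Arguments. Unset Strict Implicit.
Local Open Scope ring_scope.


Definition issq (L : finFieldType) (q : nat) (c : L) : bool :=
  [exists y : L, inFq q y && (y ^+ 2 == c)].

Lemma chi2E (L : finFieldType) q (c : L) :
  chi2 q c = if c == 0 then 0 else if issq q c then 1 else -1.
Proof. by []. Qed.

Lemma issqP (L : finFieldType) q (c : L) :
  reflect (exists y, inFq q y /\ y ^+ 2 = c) (issq q c).
Proof.
apply: (iffP existsP) => [[y /andP[h /eqP e]]|[y [h e]]]; exists y => //.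
by rewrite h e eqxx.
Qed.


Lemma Fq_add (L : finFieldType) q
  (hD : forall x y : L, (x + y) ^+ q = x ^+ q + y ^+ q) (x y : L) :
  inFq q x -> inFq q y -> inFq q (x + y).
Proof. by rewrite /inFq hD => /eqP-> /eqP->. Qed.

Lemma Fq_mul (L : finFieldType) q (x y : L) :
  inFq q x -> inFq q y -> inFq q (x * y).
Proof. by rewrite /inFq exprMn => /eqP-> /eqP->. Qed.

Lemma Fq_inv (L : finFieldType) q (x : L) : inFq q x -> inFq q (x^-1).
Proof. by rewrite /inFq exprVn => /eqP->. Qed.

Lemma Fq_div (L : finFieldType) q (x y : L) :
  inFq q x -> inFq q y -> inFq q (x / y).
Proof. by move=> hx hy; apply: Fq_mul => //; apply: Fq_inv. Qed.

Lemma Fq_1 (L : finFieldType) q : inFq q (1 : L).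
Proof. by rewrite /inFq expr1n. Qed.

Lemma Fq_0 (L : finFieldType) q : (0 < q)%N -> inFq q (0 : L).
Proof. by move=> h; rewrite /inFq expr0n eqn0Ngt h. Qed.

Lemma Fq_opp (L : finFieldType) q (hq : odd q) (x : L) : inFq q x -> inFq q (- x).
Proof. by rewrite /inFq exprNn -signr_odd hq expr1 mulN1r => /eqP->. Qed.

Lemma Fq_nat (L : finFieldType) q
  (hD : forall x y : L, (x + y) ^+ q = x ^+ q + y ^+ q) (hq : (0 < q)%N) n :
  inFq q (n%:R : L).
Proof.
elim: n => [|n IH]; first exact: Fq_0.
by rewrite -addn1 natrD; apply: Fq_add => //; apply: Fq_1.
Qed.


Lemma unit_pow (L : finFieldType) (x : L) : x != 0 -> x ^+ #|L|.-1 = 1.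
Proof.
move=> x0; have := expf_card x.
have h : #|L| = (#|L|.-1).+1 by rewrite prednK // (cardD1 x).
move=> e; apply: (mulfI x0); by rewrite mulr1 -exprS -h.
Qed.

Lemma prim_exists (L : finFieldType) : (1 < #|L|)%N ->
  exists w : L, (#|L|.-1).-primitive_root w.
Proof.
move=> h1.
have H1 : (0 < #|L|.-1)%N by rewrite -ltnS prednK // ltnW.
have H2 : all (#|L|.-1).-unity_root (enum (predC1 (0:L))).
  by apply/allP => x; rewrite mem_enum /= => x0; rewrite unity_rootE unit_pow.
have H4 : (#|L|.-1 <= size (enum (predC1 (0:L)%R)))%N by rewrite -cardE cardC1.
have /hasP[w _ hw] := @has_prim_root L #|L|.-1 _ H1 H2 (enum_uniq _) H4.
by exists w.
Qed.


Definition good (L : finFieldType) (q : nat) :=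
  [/\ forall x y : L, (x+y)^+q = x^+q + y^+q, forall x : L, (x^+q)^+q = x,
      (2:L) != 0, odd q & (1 < q)%N].

Lemma good_opp (L : finFieldType) q : good L q -> forall x : L, (- x) ^+ q = - x ^+ q.
Proof.
case=> hD _ _ hq _ x; by rewrite exprNn -signr_odd hq expr1 mulN1r.
Qed.

Lemma good_sub (L : finFieldType) q : good L q -> forall x y : L, (x - y) ^+ q = x ^+ q - y ^+ q.
Proof. move=> G x y; case: (G) => hD _ _ _ _; by rewrite hD good_opp. Qed.

Lemma beta_props (L : finFieldType) q (b beta : L) : good L q ->
  beta ^+ 2 = b -> inFq q b -> ~~ issq q b ->
  [/\ beta ^+ q = - beta, beta != 0 & b != 0].
Proof.
move=> G hbe hb hns; case: (G) => hD hC h2 hq hq1.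
have b0 : b != 0.
  apply: contra hns => /eqP->; apply/issqP; exists 0; split; last by rewrite expr0n.
  exact: Fq_0 (ltnW hq1).
have be0 : beta != 0 by apply: contra b0 => /eqP e; rewrite -hbe e expr0n.
split=> //.
have : (beta ^+ q - beta) * (beta ^+ q + beta) = 0.
  rewrite -subr_sqr -exprM mulnC exprM hbe.
  by move: hb; rewrite /inFq => /eqP->; rewrite subrr.
move/eqP; rewrite mulf_eq0 => /orP[|].
  rewrite subr_eq0 => e; case/negP: hns; apply/issqP; exists beta; split => //.
by rewrite addr_eq0 => /eqP.
Qed.

Lemma uniq0 (L : finFieldType) q (b beta u v : L) : good L q ->
  beta ^+ 2 = b -> inFq q b -> ~~ issq q b ->
  inFq q u -> inFq q v -> u + v * beta = 0 -> u = 0 /\ v = 0.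
Proof.
move=> G hbe hb hns hu hv e.
have [bq be0 b0] := beta_props G hbe hb hns.
case: (G) => hD hC h2 hq hq1.
have e2 : u - v * beta = 0.
  have : (u + v * beta) ^+ q = 0 by rewrite e expr0n eqn0Ngt (ltnW hq1).
  rewrite hD exprMn bq (eqP hu) (eqP hv) => h; by rewrite -h mulrN.
have u0 : u = 0.
  have : 2 * u = (u + v * beta) + (u - v * beta) by ring.
  rewrite e e2 addr0.
  by move/eqP; rewrite mulf_eq0 (negbTE h2) /= => /eqP.
split=> //; move: e; rewrite u0 add0r => /eqP; rewrite mulf_eq0 (negbTE be0) orbF.
by move/eqP.
Qed.

Lemma uniq2 (L : finFieldType) q (b beta x y x' y' : L) : good L q ->
  beta ^+ 2 = b -> inFq q b -> ~~ issq q b ->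
  inFq q x -> inFq q y -> inFq q x' -> inFq q y' ->
  x + y * beta = x' + y' * beta -> x = x' /\ y = y'.
Proof.
move=> G hbe hb hns hx hy hx' hy' e.
have hopp := Fq_opp (let: And5 _ _ _ hq _ := G in hq).
have hadd := Fq_add (let: And5 hD _ _ _ _ := G in hD).
have [] := uniq0 G hbe hb hns (u := x - x') (v := y - y').
- by apply: hadd => //; apply: hopp.
- by apply: hadd => //; apply: hopp.
- by rewrite mulrBl addrACA e -opprD subrr.
by move=> /eqP; rewrite subr_eq0 => /eqP -> /eqP; rewrite subr_eq0 => /eqP ->.
Qed.

Lemma decomp (L : finFieldType) q (b beta X : L) : good L q ->
  beta ^+ 2 = b -> inFq q b -> ~~ issq q b ->
  exists x y, [/\ inFq q x, inFq q y & X = x + y * beta].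
Proof.
move=> G hbe hb hns.
have [bq be0 b0] := beta_props G hbe hb hns.
case: (G) => hD hC h2 hq hq1.
have F2 : inFq q (2 : L) by exact: (Fq_nat hD (ltnW hq1) 2).
exists ((X + X ^+ q) / 2), ((X - X ^+ q) / (2 * beta)); split.
- by rewrite /inFq expr_div_n hD hC (eqP F2) [X ^+ q + X]addrC.
- rewrite /inFq expr_div_n (good_sub G) hC exprMn (eqP F2) bq.
  apply/eqP. field. by rewrite oppr_eq0 h2 be0.
- field. by rewrite h2 be0.
Qed.


Lemma Fq_pow1 (L : finFieldType) q (c : L) : (0 < q)%N -> inFq q c -> c != 0 -> c ^+ q.-1 = 1.
Proof.
move=> q0 /eqP hc c0; apply: (mulfI c0); rewrite mulr1 -exprS prednK //.
Qed.

Lemma sq_in_L (L : finFieldType) q (c : L) : good L q -> #|L| = (q ^ 2)%N ->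
  inFq q c -> c != 0 -> exists z, z ^+ 2 = c.
Proof.
move=> G hL hc c0; case: (G) => hD hC h2 hq hq1.
have [w hw] : exists w : L, (#|L|.-1).-primitive_root w.
  by apply: prim_exists; rewrite hL; nia.
have [i hi] := prim_rootP hw (unit_pow c0).
have hc1 := Fq_pow1 (ltnW hq1) hc c0.
set s := q./2.
have hs : q = (2 * s).+1 by rewrite /s -[q in LHS]odd_double_half hq /= -muln2 mulnC.
have hdv : ((2 * s) * (2 * (s + 1)) %| (2 * s) * i)%N.
  have -> : ((2 * s) * (2 * (s + 1)) = #|L|.-1)%N by rewrite hL hs; lia.
  rewrite (prim_order_dvd hw) mulnC exprM -hi. have -> : (2 * s = q.-1)%N by rewrite hs. by rewrite hc1.
rewrite dvdn_pmul2l in hdv; last by rewrite hs in hq1; lia.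
case/dvdnP: hdv => j hj.
exists (w ^+ (j * (s + 1))); rewrite hi -exprM hj; congr (_ ^+ _); lia.
Qed.

Lemma sq_Fq (L : finFieldType) q (y : L) : inFq q y -> inFq q (y ^+ 2).
Proof. by move=> h; rewrite expr2; apply: Fq_mul. Qed.

Lemma issq_mulsq (L : finFieldType) q (c d : L) :
  inFq q d -> d != 0 -> issq q (c * d ^+ 2) = issq q c.
Proof.
move=> hd d0; apply/issqP/issqP => [[y [hy e]]|[y [hy e]]].
  exists (y / d); split; first exact: Fq_div.
  by rewrite expr_div_n e mulfK // expf_neq0.
by exists (y * d); split; [exact: Fq_mul | rewrite exprMn e].
Qed.

Lemma M1 (L : finFieldType) q (b beta c : L) : good L q -> #|L| = (q ^ 2)%N ->
  beta ^+ 2 = b -> inFq q b -> ~~ issq q b ->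
  inFq q c -> c != 0 -> issq q (c * b) = ~~ issq q c.
Proof.
move=> G hL hbe hb hns hc c0.
have [bq be0 b0] := beta_props G hbe hb hns.
case: (G) => hD hC h2 hq hq1.
apply/idP/idP.
  move=> /issqP[t [ht et]]; apply/negP => /issqP[s [hs es]].
  have s0 : s != 0 by apply: contra c0 => /eqP s0; rewrite -es s0 expr0n.
  case/negP: hns; apply/issqP; exists (t / s); split; first exact: Fq_div.
  by rewrite expr_div_n et es mulrAC divff // mul1r.
move=> hn; have [z ez] := sq_in_L G hL hc c0.
have [x [y [hx hy ez']]] := decomp z G hbe hb hns.
have F2 : inFq q (2 : L) by exact: (Fq_nat hD (ltnW hq1) 2).
have hadd := Fq_add hD; have hopp := Fq_opp hq.
have H1 : inFq q (x ^+ 2 + b * y ^+ 2 - c).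
  apply: (hadd); last exact: (hopp).
  by apply: (hadd); [exact: sq_Fq | apply: Fq_mul => //; exact: sq_Fq].
have H2 : inFq q (2 * x * y) by apply: Fq_mul => //; exact: Fq_mul.
have H3 : (x ^+ 2 + b * y ^+ 2 - c) + (2 * x * y) * beta = 0.
  rewrite -ez ez' -hbe; ring.
have [e1 e2] := uniq0 G hbe hb hns H1 H2 H3.
move/eqP: e2; rewrite !mulf_eq0 (negbTE h2) /= => /orP[/eqP x0|/eqP y0].
  apply/issqP; exists (b * y); split; first exact: Fq_mul.
  move/eqP: e1; rewrite x0 subr_eq0 => /eqP <-; rewrite -hbe; ring.
case/negP: hn; apply/issqP; exists x; split => //.
by move/eqP: e1; rewrite y0 subr_eq0 => /eqP <-; ring.
Qed.

Lemma nsq_form (L : finFieldType) q (b beta c : L) : good L q -> #|L| = (q ^ 2)%N ->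
  beta ^+ 2 = b -> inFq q b -> ~~ issq q b ->
  inFq q c -> c != 0 -> ~~ issq q c -> exists s, [/\ inFq q s, s != 0 & c = b * s ^+ 2].
Proof.
move=> G hL hbe hb hns hc c0 hn.
have [bq be0 b0] := beta_props G hbe hb hns.
have := M1 G hL hbe hb hns hc c0; rewrite hn => /issqP[t [ht et]].
exists (t / b); split; first exact: Fq_div.
  by rewrite mulf_neq0 ?invr_eq0 //; apply: contraNneq (mulf_neq0 c0 b0) => t0; rewrite -et t0 expr0n.
rewrite expr_div_n et; field; exact: b0.
Qed.

Lemma issq_mul (L : finFieldType) q (b beta c d : L) : good L q -> #|L| = (q ^ 2)%N ->
  beta ^+ 2 = b -> inFq q b -> ~~ issq q b ->
  inFq q c -> c != 0 -> inFq q d -> d != 0 -> issq q (c * d) = (issq q c == issq q d).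
Proof.
move=> G hL hbe hb hns hc c0 hd d0.
case: (boolP (issq q c)) => [hsq|hn].
  move: (hsq) => /issqP[s [hs es]].
  have s0 : s != 0 by apply: contraNneq c0 => s0; rewrite -es s0 expr0n.
  rewrite -es mulrC; by rewrite (issq_mulsq d hs s0); case: (issq q d).
have [s [hs s0 ->]] := nsq_form G hL hbe hb hns hc c0 hn.
rewrite mulrAC (issq_mulsq _ hs s0) mulrC (M1 G hL hbe hb hns hd d0); by case: (issq q d).
Qed.

Lemma neg1_3 (L : finFieldType) q : good L q -> (q %% 4 = 3)%N -> ~~ issq q (-1 : L).
Proof.
move=> G hq4; case: (G) => hD hC h2 hq hq1.
apply/negP => /issqP[y [hy ey]].
have y0 : y != 0.
  apply/eqP => y0; move: ey; rewrite y0 expr0n /= => /eqP; by rewrite eq_sym oppr_eq0 oner_eq0.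
have := Fq_pow1 (ltnW hq1) hy y0.
have -> : q.-1 = (2 * (2 * (q %/ 4)).+1)%N by lia.
rewrite exprM ey -signr_odd /= oddM /= expr1 => e.
case/negP: h2; apply/eqP; have -> : (2 : L) = 1 - (-1) by ring.
by rewrite e subrr.
Qed.

Lemma neg1_1 (L : finFieldType) q : good L q -> #|L| = (q ^ 2)%N ->
  (q %% 4 = 1)%N -> issq q (-1 : L).
Proof.
move=> G hL hq4; case: (G) => hD hC h2 hq hq1.
have [w hw] : exists w : L, (#|L|.-1).-primitive_root w.
  by apply: prim_exists; rewrite hL; nia.
set t := (q %/ 4)%N.
have ht : q = (4 * t).+1 by rewrite /t; lia.
have t0 : (0 < t)%N by lia.
set e := (t * q.+1)%N.
have hN : #|L|.-1 = (4 * e)%N by rewrite hL /e ht; lia.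
have w2 : w ^+ (2 * e) = -1.
  have h1 : (w ^+ (2 * e) - 1) * (w ^+ (2 * e) + 1) = 0.
    rewrite -subr_sqr -exprM expr1n.
    have -> : (2 * e * 2 = 4 * e)%N by lia.
    by rewrite -hN prim_expr_order // subrr.
  move/eqP: h1; rewrite mulf_eq0 => /orP[|]; last by rewrite addr_eq0 => /eqP.
  rewrite subr_eq0 -(prim_order_dvd hw) hN gtnNdvd //; lia.
apply/issqP; exists (w ^+ e); split; last by rewrite -exprM mulnC.
rewrite /inFq; apply/eqP.
rewrite -exprM.
have -> : (e * q = e + #|L|.-1 * t)%N by rewrite hN /e ht; lia.
by rewrite exprD (exprM w (#|L|.-1) t) (prim_expr_order hw) expr1n mulr1.
Qed.

Lemma Fq_exp (L : finFieldType) q (x : L) n : inFq q x -> inFq q (x ^+ n).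
Proof. by rewrite /inFq -exprM mulnC exprM => /eqP->. Qed.

Ltac fq hD hq hq1 :=
  repeat first [ assumption | exact: (Fq_nat hD (ltnW hq1) _) | exact: (Fq_0 _ (ltnW hq1))
               | exact: Fq_1 | apply: Fq_exp | apply: (Fq_add hD) | apply: Fq_mul
               | apply: (Fq_opp hq) | apply: Fq_inv ].


Lemma card_sq (L : finFieldType) q (c : L) : good L q -> c != 0 ->
  #|[set Y : L | inFq q Y && (Y ^+ 2 == c)]| = if issq q c then 2%N else 0%N.
Proof.
move=> G c0; case: (G) => hD hC h2 hq hq1.
case: (boolP (issq q c)) => [/issqP[r [hr er]]|hn].
  have -> : [set Y : L | inFq q Y && (Y ^+ 2 == c)] = [set r; -r].
    apply/setP => Y; rewrite !inE; apply/idP/idP.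
      case/andP=> _; rewrite -er -subr_eq0 subr_sqr mulf_eq0 subr_eq0 addr_eq0.
      by [].
    case/orP=> /eqP->; first by rewrite hr er eqxx.
    by rewrite Fq_opp // sqrrN er eqxx.
  have r0 : r != 0 by apply: contraNneq c0 => r0; rewrite -er r0 expr0n.
  rewrite cards2; suff -> : (r != -r) = true by [].
  rewrite -addr_eq0 -mulr2n -mulr_natr mulf_eq0.
  by rewrite (negbTE r0) (negbTE h2).
apply/eqP; rewrite cards_eq0; apply/eqP/setP => Y; rewrite !inE.
apply/negP => /andP[h e]; case/negP: hn; apply/issqP; exists Y; split => //.
exact/eqP.
Qed.

Lemma card_scale (L : finFieldType) (P : pred L) (d : L) : d != 0 ->
  #|[set X | P (X / d)]| = #|[set Y | P Y]|.
Proof.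
move=> d0.
have -> : [set X | P (X / d)] = (fun Y => Y * d) @: [set Y | P Y].
  apply/setP => X; rewrite inE; apply/idP/imsetP => [h|[Y hY ->]].
    by exists (X / d); rewrite ?inE ?divfK.
  by rewrite inE in hY; rewrite mulfK.
by rewrite card_imset //; apply: mulIf.
Qed.

Lemma ff_dec (L : finFieldType) q (b beta a x y : L) : good L q ->
  beta ^+ 2 = b -> inFq q b -> ~~ issq q b -> inFq q x -> inFq q y ->
  ff q a (x + y * beta) = ((1 + a) * x ^+ 2 + (a - 1) * b * y ^+ 2) + (2 * a * x * y) * beta.
Proof.
move=> G hbe hb hns hx hy.
have [bq be0 b0] := beta_props G hbe hb hns.
case: (G) => hD hC h2 hq hq1.
rewrite /ff exprSr hD exprMn bq (eqP hx) (eqP hy) -hbe; ring.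
Qed.

Lemma part1 (L : finFieldType) q (b beta a al : L) : good L q ->
  beta ^+ 2 = b -> inFq q b -> ~~ issq q b ->
  inFq q a -> a != 0 -> a != 1 -> a != -1 -> inFq q al -> al != 0 ->
  npre q a al = ((if issq q (al / (1 + a)) then 2 else 0) +
                 (if issq q (al / ((a - 1) * b)) then 2 else 0))%N.
Proof.
move=> G hbe hb hns ha a0 a1 a2 hal al0.
have [bq be0 b0] := beta_props G hbe hb hns.
case: (G) => hD hC h2 hq hq1.
have F0 : inFq q (0 : L) by exact: Fq_0 (ltnW hq1).
have F2 : inFq q (2 : L) by exact: (Fq_nat hD (ltnW hq1) 2).
have ha1 : 1 + a != 0 by rewrite addrC addr_eq0.
have ham : a - 1 != 0 by rewrite subr_eq0.
set c1 := al / (1 + a); set c2 := al / ((a - 1) * b).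
have c10 : c1 != 0 by rewrite /c1 mulf_neq0 ?invr_eq0.
have c20 : c2 != 0 by rewrite /c2 mulf_neq0 ?invr_eq0 ?mulf_neq0.
pose S1 := [set Y : L | inFq q Y && (Y ^+ 2 == c1)].
pose S2 := [set X : L | (fun Y => inFq q Y && (Y ^+ 2 == c2)) (X / beta)].
have hS : [set X | ff q a X == al] = S1 :|: S2.
  apply/setP => X; rewrite !inE; apply/idP/idP.
    have [x [y [hx hy ->]]] := decomp X G hbe hb hns.
    rewrite (ff_dec a G hbe hb hns hx hy) => /eqP e.
    have H1 : inFq q ((1 + a) * x ^+ 2 + (a - 1) * b * y ^+ 2 - al).
      by fq hD hq hq1.
    have H2 : inFq q (2 * a * x * y) by fq hD hq hq1.
    have H3 : ((1 + a) * x ^+ 2 + (a - 1) * b * y ^+ 2 - al) + (2 * a * x * y) * beta = 0.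
      by rewrite addrAC e subrr.
    have [e1 e2] := uniq0 G hbe hb hns H1 H2 H3.
    move/eqP: e2; rewrite !mulf_eq0 (negbTE h2) (negbTE a0) /= => /orP[/eqP x0|/eqP y0].
      subst x; apply/orP; right.
      have -> : (0 + y * beta) / beta = y by field.
      rewrite hy /=; apply/eqP; rewrite /c2; move/eqP: e1; rewrite subr_eq0 => /eqP <-.
      field; by rewrite b0 ham.
    subst y; apply/orP; left; rewrite mul0r addr0 hx /=.
    apply/eqP; rewrite /c1; move/eqP: e1; rewrite subr_eq0 => /eqP <-.
    field; by rewrite ha1.
  case/orP => /andP[hX /eqP eX].
    have -> : X = X + 0 * beta by rewrite mul0r addr0.
    rewrite (ff_dec a G hbe hb hns hX F0) eX /c1; apply/eqP; field; exact: ha1.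
  have -> : X = 0 + (X / beta) * beta by rewrite add0r divfK.
  rewrite (ff_dec a G hbe hb hns F0 hX) eX /c2; apply/eqP; field; by rewrite be0 b0 ham.
have hI : S1 :&: S2 = set0.
  apply/setP => X; rewrite !inE; apply/negP => /andP[/andP[h1 /eqP e1] /andP[h2' /eqP e2]].
  have := uniq0 G hbe hb hns h1 (Fq_opp hq h2') (u := X) (v := - (X / beta)).
  rewrite mulNr divfK // subrr => /(_ erefl) [X0 _].
  by move: c10; rewrite -e1 X0 expr0n eqxx.
rewrite /npre hS cardsU hI cards0 subn0 card_sq // /S2.
by rewrite (card_scale (fun Y => inFq q Y && (Y ^+ 2 == c2)) be0) card_sq.
Qed.


Lemma part2_eq (L : finFieldType) q (b beta a al X : L) : good L q ->
  beta ^+ 2 = b -> inFq q b -> ~~ issq q b ->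
  inFq q a -> a != 0 -> a != 1 -> a != -1 -> inFq q al -> al != 0 ->
  ff q a X = al * beta ->
  exists x y, [/\ inFq q x, inFq q y, X = x + y * beta, y != 0 &
     (1 + a) * x ^+ 2 + (a - 1) * b * y ^+ 2 = 0 /\ 2 * a * x * y = al].
Proof.
move=> G hbe hb hns ha a0 a1 a2 hal al0 e.
have [bq be0 b0] := beta_props G hbe hb hns.
case: (G) => hD hC h2 hq hq1.
have [x [y [hx hy eX]]] := decomp X G hbe hb hns.
move: e; rewrite eX (ff_dec a G hbe hb hns hx hy) => e.
have H1 : inFq q ((1 + a) * x ^+ 2 + (a - 1) * b * y ^+ 2) by fq hD hq hq1.
have H2 : inFq q (2 * a * x * y - al) by fq hD hq hq1.
have H3 : ((1 + a) * x ^+ 2 + (a - 1) * b * y ^+ 2) + (2 * a * x * y - al) * beta = 0.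
  by rewrite (mulrBl beta) addrA e subrr.
have [e1 /eqP e2] := uniq0 G hbe hb hns H1 H2 H3.
rewrite subr_eq0 in e2.
exists x, y; split => //; last by split => //; exact/eqP.
by apply: contraNneq al0 => y0; rewrite -(eqP e2) y0 mulr0.
Qed.

Lemma part2_none (L : finFieldType) q (b beta a al : L) : good L q ->
  beta ^+ 2 = b -> inFq q b -> ~~ issq q b ->
  inFq q a -> a != 0 -> a != 1 -> a != -1 -> inFq q al -> al != 0 ->
  ~~ issq q (- ((a - 1) * b / (a + 1))) -> npre q a (al * beta) = 0%N.
Proof.
move=> G hbe hb hns ha a0 a1 a2 hal al0 hn.
have [bq be0 b0] := beta_props G hbe hb hns.
case: (G) => hD hC h2 hq hq1.
have ha1 : 1 + a != 0 by rewrite addrC addr_eq0.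
have ha1' : a + 1 != 0 by rewrite addr_eq0.
apply/eqP; rewrite cards_eq0; apply/eqP/setP => X; rewrite !inE.
apply/negP => /eqP e.
have [x [y [hx hy _ y0 [e1 _]]]] := part2_eq G hbe hb hns ha a0 a1 a2 hal al0 e.
case/negP: hn; apply/issqP; exists (x / y); split; first by fq hD hq hq1.
have hA : (1 + a) * x ^+ 2 = - ((a - 1) * b * y ^+ 2).
  by apply/eqP; rewrite -subr_eq0 opprK; apply/eqP.
rewrite expr_div_n -[x ^+ 2](mulKf ha1) hA; field.
by rewrite y0 ha1'.
Qed.

Lemma part2_count (L : finFieldType) q (b beta a al g : L) : good L q ->
  beta ^+ 2 = b -> inFq q b -> ~~ issq q b ->
  inFq q a -> a != 0 -> a != 1 -> a != -1 -> inFq q al -> al != 0 ->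
  inFq q g -> g ^+ 2 = - ((a - 1) * b / (a + 1)) ->
  npre q a (al * beta) = ((if issq q (al / (2 * a * g)) then 2 else 0) +
                          (if issq q (- (al / (2 * a * g))) then 2 else 0))%N.
Proof.
move=> G hbe hb hns ha a0 a1 a2 hal al0 hg eg.
have [bq be0 b0] := beta_props G hbe hb hns.
case: (G) => hD hC h2 hq hq1.
have F0 : inFq q (0 : L) by exact: Fq_0 (ltnW hq1).
have ha1 : 1 + a != 0 by rewrite addrC addr_eq0.
have ha1' : a + 1 != 0 by rewrite addr_eq0.
have ham : a - 1 != 0 by rewrite subr_eq0.
have g0 : g != 0.
  apply/eqP => g0; have : (a - 1) * b / (a + 1) == 0 by rewrite -oppr_eq0 -eg g0 expr0n.
  by rewrite !mulf_eq0 invr_eq0 (negbTE ha1') (negbTE ham) (negbTE b0).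
have hgb : g + beta != 0.
  apply/eqP => e; have := uniq0 G hbe hb hns hg (Fq_1 _ q) (u := g) (v := 1).
  by rewrite mul1r => /(_ e) [_ /eqP]; rewrite oner_eq0.
have hgb' : - g + beta != 0.
  apply/eqP => e; have := uniq0 G hbe hb hns (Fq_opp hq hg) (Fq_1 _ q) (u := - g) (v := 1).
  by rewrite mul1r => /(_ e) [_ /eqP]; rewrite oner_eq0.
set c := al / (2 * a * g).
have c0 : c != 0 by rewrite /c mulf_neq0 // invr_eq0 !mulf_neq0.
have hc0 : - c != 0 by rewrite oppr_eq0.
pose S1 := [set X : L | (fun Y => inFq q Y && (Y ^+ 2 == c)) (X / (g + beta))].
pose S2 := [set X : L | (fun Y => inFq q Y && (Y ^+ 2 == - c)) (X / (- g + beta))].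
have hS : [set X | ff q a X == al * beta] = S1 :|: S2.
  apply/setP => X; rewrite !inE; apply/idP/idP.
    move/eqP => e.
    have [x [y [hx hy -> y0 [e1 e2]]]] := part2_eq G hbe hb hns ha a0 a1 a2 hal al0 e.
    have hx2 : (x - g * y) * (x + g * y) = 0.
      rewrite -subr_sqr exprMn eg.
      have hA : (1 + a) * x ^+ 2 = - ((a - 1) * b * y ^+ 2).
        by apply/eqP; rewrite -subr_eq0 opprK; apply/eqP.
      rewrite -[x ^+ 2](mulKf ha1) hA; field; by rewrite ?g0 ?y0 ?a0 ?h2 ?ha1' ?ha1 ?be0 ?b0 ?ham ?hgb ?hgb'.
    move/eqP: hx2; rewrite mulf_eq0 subr_eq0 addr_eq0 => /orP[/eqP xg|/eqP xg]; subst x.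
      apply/orP; left.
      have -> : (g * y + y * beta) / (g + beta) = y by field.
      rewrite hy /=; apply/eqP; rewrite /c -e2; field; by rewrite ?g0 ?y0 ?a0 ?h2 ?ha1' ?ha1 ?be0 ?b0 ?ham ?hgb ?hgb'.
    apply/orP; right.
    have -> : (- (g * y) + y * beta) / (- g + beta) = y by field.
    rewrite hy /=; apply/eqP; rewrite /c -e2; field; by rewrite ?g0 ?y0 ?a0 ?h2 ?ha1' ?ha1 ?be0 ?b0 ?ham ?hgb ?hgb'.
  case/orP => /andP[hY /eqP eY].
    have -> : X = g * (X / (g + beta)) + (X / (g + beta)) * beta.
      field; by rewrite ?hgb ?hgb'.
    rewrite (ff_dec a G hbe hb hns (Fq_mul hg hY) hY).
    set Y := X / (g + beta).
    have -> : 2 * a * (g * Y) * Y = 2 * a * g * Y ^+ 2 by ring.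
    rewrite exprMn eY eg /c; apply/eqP; field; by rewrite ?g0 ?y0 ?a0 ?h2 ?ha1' ?ha1 ?be0 ?b0 ?ham ?hgb ?hgb'.
  have -> : X = - g * (X / (- g + beta)) + (X / (- g + beta)) * beta.
    field; by rewrite ?hgb ?hgb'.
  rewrite (ff_dec a G hbe hb hns (Fq_mul (Fq_opp hq hg) hY) hY).
  set Y := X / (- g + beta).
  have -> : 2 * a * (- g * Y) * Y = - (2 * a * g * Y ^+ 2) by ring.
  rewrite exprMn eY sqrrN eg /c; apply/eqP; field; by rewrite ?g0 ?y0 ?a0 ?h2 ?ha1' ?ha1 ?be0 ?b0 ?ham ?hgb ?hgb'.
have hI : S1 :&: S2 = set0.
  apply/setP => X; rewrite !inE; apply/negP => /andP[/andP[h1 /eqP e1] /andP[h1' /eqP e1']].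
  set Y := X / (g + beta) in h1 e1; set Y' := X / (- g + beta) in h1' e1'.
  have eYY : g * Y + Y * beta = - g * Y' + Y' * beta.
    rewrite /Y /Y'; field; by rewrite ?hgb ?hgb'.
  have [e3 e4] := uniq2 G hbe hb hns (Fq_mul hg h1) h1 (Fq_mul (Fq_opp hq hg) h1') h1' eYY.
  have h : 2 * g * Y = g * Y - (- g * Y') by rewrite -e4; ring.
  rewrite e3 subrr in h; move/eqP: h; rewrite mulf_eq0 mulf_eq0 (negbTE h2) (negbTE g0) /= => /eqP Y0.
  by move: e1; rewrite Y0 expr0n => /esym/eqP; rewrite (negbTE c0).
rewrite /npre hS cardsU hI cards0 subn0.
rewrite (card_scale (fun Y => inFq q Y && (Y ^+ 2 == c)) hgb) card_sq //.
by rewrite (card_scale (fun Y => inFq q Y && (Y ^+ 2 == - c)) hgb') card_sq.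
Qed.


Lemma setup (L : finFieldType) (p k q : nat)
  (hp : prime p) (hodd : odd p) (hk : (0 < k)%N) (hq : q = (p ^ k)%N)
  (hL : #|L| = (q ^ 2)%N) : good L q.
Proof.
have pL : p \in [pchar L].
  by apply: (card_finPcharP (n := (k * 2)%N)) => //; rewrite hL hq expnM.
split.
- move=> x y; apply: exprDn_pchar.
  by rewrite hq pnatX pnatE // pL.
- by move=> x; rewrite -exprM mulnn -hL expf_card.
- apply/negP => h0.
  have : (2 \in [pchar L])%N by apply/andP; split.
  by rewrite (pcharf_eq pL) inE => /eqP e; rewrite -e in hodd.
- by rewrite hq oddX hodd orbT.
rewrite hq; clear hq hL; case: k hk => // k _; rewrite expnS.
have := prime_gt1 hp; have : (0 < p ^ k)%N by rewrite expn_gt0 prime_gt0.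
nia.
Qed.

Lemma chi2_nz (L : finFieldType) q (c : L) : c != 0 ->
  chi2 q c = if issq q c then 1 else -1.
Proof. by move=> c0; rewrite chi2E (negbTE c0). Qed.

Unset Implicit Arguments.

Theorem theorem21 (L : finFieldType) (p k q : nat)
  (hp : prime p) (hodd : odd p) (hk : (0 < k)%N) (hq : q = (p ^ k)%N)
  (hL : #|L| = (q ^ 2)%N)
  (a b beta alpha : L)
  (ha : inFq q a) (ha0 : a != 0) (ha1 : a != 1) (ha2 : a != -1)
  (hb : inFq q b) (hbns : chi2 q b = -1)
  (hbeta : beta ^+ 2 = b)
  (hal : inFq q alpha) (hal0 : alpha != 0) :
  [/\ npre q a alpha =
        (if (chi2 q (alpha * (a - 1)) == 1) && (chi2 q (alpha * (a + 1)) == -1) then 0%N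
         else if (chi2 q (alpha * (a - 1)) == -1) && (chi2 q (alpha * (a + 1)) == 1) then 4%N
         else 2%N),
      (q %% 4 = 3)%N ->
        npre q a (alpha * beta) = (if chi2 q (1 - a ^+ 2) == 1 then 0%N else 2%N)
    & (q %% 4 = 1)%N ->
        (chi2 q (1 - a ^+ 2) = 1 -> npre q a (alpha * beta) = 0%N) /\
        (chi2 q (1 - a ^+ 2) = -1 ->
           forall ga : L, inFq q ga -> ga ^+ 2 = - ((a - 1) * b / (a + 1)) ->
             npre q a (alpha * beta) =
               (if chi2 q (2 * ga * alpha * a) == 1 then 4%N else 0%N))].
Proof.
have G := setup hp hodd hk hq hL.
case: (G) => hD hC h2 hqo hq1.
have b0 : b != 0 by apply/eqP => b0; move: hbns; rewrite b0 chi2E eqxx.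
have hns : ~~ issq q b by move: hbns; rewrite chi2_nz //; case: (issq q b).
have hap : a + 1 != 0 by rewrite addr_eq0.
have ham : a - 1 != 0 by rewrite subr_eq0.
have hap' : 1 + a != 0 by rewrite addrC.
have F1 : inFq q (a + 1) by fq hD hqo hq1.
have Fm : inFq q (a - 1) by fq hD hqo hq1.
have Fa2 : inFq q (1 - a ^+ 2) by fq hD hqo hq1.
have h1a : 1 - a ^+ 2 != 0.
  have -> : 1 - a ^+ 2 = - ((a - 1) * (a + 1)) by ring.
  by rewrite oppr_eq0 mulf_neq0.
have ED : issq q (- ((a - 1) * b / (a + 1))) = ~~ issq q (1 - a ^+ 2).
  rewrite -(M1 G hL hbeta hb hns Fa2 h1a).
  rewrite -(issq_mulsq ((1 - a ^+ 2) * b) (Fq_inv F1) (invr_neq0 hap)).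
  by congr issq; field; rewrite hap.
have hchi := chi2_nz q h1a.
have Fn1 : inFq q (-1 : L) by fq hD hqo hq1.
have n10 : (-1 : L) != 0 by rewrite oppr_eq0 oner_eq0.
have cprops : forall g, inFq q g -> g ^+ 2 = - ((a - 1) * b / (a + 1)) ->
    [/\ g != 0, inFq q (alpha / (2 * a * g)) & alpha / (2 * a * g) != 0].
  move=> g hg eg.
  have g0 : g != 0.
    apply/eqP => g0; have : (a - 1) * b / (a + 1) == 0 by rewrite -oppr_eq0 -eg g0 expr0n.
    by rewrite !mulf_eq0 invr_eq0 (negbTE hap) (negbTE ham) (negbTE b0).
  split => //; first by fq hD hqo hq1.
  by rewrite mulf_neq0 // invr_eq0 !mulf_neq0.
have issqN : forall z : L, inFq q z -> z != 0 -> issq q (- z) = (issq q (-1 : L) == issq q z).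
  move=> z hz z0; rewrite -[- z]mulN1r; exact: (issq_mul G hL hbeta hb hns Fn1 n10 hz z0).
split.
- rewrite (part1 G hbeta hb hns ha ha0 ha1 ha2 hal hal0).
  have E1 : issq q (alpha / (1 + a)) = issq q (alpha * (a + 1)).
    rewrite -(issq_mulsq (alpha * (a + 1)) (Fq_inv F1) (invr_neq0 hap)).
    congr issq; field; by rewrite hap.
  have E2 : issq q (alpha / ((a - 1) * b)) = ~~ issq q (alpha * (a - 1)).
    have Fd : inFq q ((a - 1) * b)^-1 by fq hD hqo hq1.
    have d0 : ((a - 1) * b)^-1 != 0 by rewrite invr_neq0 // mulf_neq0.
    have Fc : inFq q (alpha * (a - 1)) by fq hD hqo hq1.
    rewrite -(M1 G hL hbeta hb hns Fc (mulf_neq0 hal0 ham)).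
    rewrite -(issq_mulsq (alpha * (a - 1) * b) Fd d0).
    by congr issq; field; rewrite ?ham ?b0.
  rewrite E1 E2 (chi2_nz _ (mulf_neq0 hal0 ham)) (chi2_nz _ (mulf_neq0 hal0 hap)).
  by case: (issq q (alpha * (a - 1))); case: (issq q (alpha * (a + 1))).
- move=> h3; rewrite hchi; case: (boolP (issq q (1 - a ^+ 2))) => hs /=.
    by apply: (part2_none G hbeta hb hns ha ha0 ha1 ha2 hal hal0); rewrite ED hs.
  have : issq q (- ((a - 1) * b / (a + 1))) by rewrite ED hs.
  move/issqP => [g [hg eg]]; have [g0 Fc c0] := cprops g hg eg.
  rewrite (part2_count G hbeta hb hns ha ha0 ha1 ha2 hal hal0 hg eg).
  rewrite (issqN _ Fc c0) (negbTE (neg1_3 G h3)).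
  by case: (issq q (alpha / (2 * a * g))).
move=> h1; split.
  move=> hc1; apply: (part2_none G hbeta hb hns ha ha0 ha1 ha2 hal hal0).
  rewrite ED negbK; move: hc1; rewrite hchi.
  by case: (issq q (1 - a ^+ 2)).
move=> hcm ga hg eg; have [g0 Fc c0] := cprops ga hg eg.
rewrite (part2_count G hbeta hb hns ha ha0 ha1 ha2 hal hal0 hg eg).
rewrite (issqN _ Fc c0) (neg1_1 G hL h1).
have Fd : inFq q (2 * a * ga) by fq hD hqo hq1.
have d0 : 2 * a * ga != 0 by rewrite !mulf_neq0.
have -> : 2 * ga * alpha * a = alpha / (2 * a * ga) * (2 * a * ga) ^+ 2.
  by field; rewrite ?d0 ?g0 ?ha0 ?h2.
rewrite chi2_nz; last by rewrite mulf_neq0 // expf_neq0.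
rewrite (issq_mulsq _ Fd d0).
by case: (issq q (alpha / (2 * a * ga))).
Qed.
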